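(* Let $k$ be a field of characteristic not $2$ and $n$ a $3$-fold Pfister form on an $8$-dimensional $k$-space $V$. The map $\mathfrak G:\mathfrak{Tri}^*(n)\to\mathfrak{Aut}(n)$, defined on objects by $\boldsymbol\alpha\mapsto(\boldsymbol\alpha,\boldsymbol\alpha^2)$ and on morphisms by $[h]\mapsto[h]$, is a full and faithful functor which is injective on objects. Moreover, the image of $\mathfrak G$ is a full subcategory of $\mathfrak{Tri}(n)$.
   Context: $\mathrm{GO}(n)$ is the group of similarities of $(V,n)$; $\mathrm{GO}^+(n)$ the subgroup of proper similarities (those whose induced automorphism of the even Clifford algebra $C_0(V,n)$ is trivial on its centre). $\mathrm{PGO}(n)=\mathrm{GO}(n)/k^*$, $\mathrm{PGO}^+(n)=\mathrm{GO}^+(n)/k^*$, $[h]$ the class of $h$. $\mathbf{PGO}(n)$ is the affine group scheme over $k$ assigning to each commutative associative unital $k$-algebra $A$ the group of $A$-algebra automorphisms of $A\otimes_k\mathrm{End}_k(V)$ commuting with the extension of the adjoint involution of the polar form $b_n$; $\mathbf{PGO}^+(n)$ is its identity component; $k$-points are identified with $\mathrm{PGO}(n)$, $\mathrm{PGO}^+(n)$ via $[h]\mapsto(x\mapsto hxh^{-1})$. Automorphisms of $\mathbf{PGO}^+(n)$ defined over $k$ are natural transformations from $\mathbf{PGO}^+(n)$ to itself whose components are group automorphisms. For $[h]\in\mathrm{PGO}(n)$, $\boldsymbol\kappa_{[h]}$ is the automorphism of $\mathbf{PGO}^+(n)$ given at each $A$ by conjugation by the image of $[h]$ in $\mathbf{PGO}(n)(A)$.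 An automorphism is inner if it equals $\boldsymbol\kappa_{[g]}$ for some $[g]\in\mathrm{PGO}^+(n)$, outer otherwise; it is weakly inner if it equals $\boldsymbol\kappa_{[h]}$ for some $h\in\mathrm{GO}(n)$ and strongly outer otherwise; $\mathbf{Inn}^*$ is the subgroup of weakly inner automorphisms. A trialitarian automorphism is an outer automorphism of $\mathbf{PGO}^+(n)$ defined over $k$ of order three. $\mathfrak{Tri}^*(n)$ is the groupoid whose objects are the trialitarian automorphisms, with morphisms $\boldsymbol\alpha\to\boldsymbol\beta$ the elements $[h]\in\mathrm{PGO}(n)$ with $\boldsymbol\kappa_{[h]}\boldsymbol\alpha\boldsymbol\kappa_{[h]}^{-1}=\boldsymbol\beta$. $\mathfrak{Aut}(n)$ is the groupoid whose objects are pairs of automorphisms of $\mathbf{PGO}^+(n)$ defined over $k$ and whose morphisms $(\boldsymbol\alpha_1,\boldsymbol\alpha_2)\to(\boldsymbol\beta_1,\boldsymbol\beta_2)$ are the $[h]\in\mathrm{PGO}(n)$ with $\boldsymbol\kappa_{[h]}\boldsymbol\alpha_r\boldsymbol\kappa_{[h]}^{-1}=\boldsymbol\beta_r$, $r=1,2$. $\mathfrak{Tri}(n)$ is the full subcategory of $\mathfrak{Aut}(n)$ whose objects are the trialitarian pairs, i.e. pairs of strongly outer automorphisms lying in different left cosets of $\mathbf{Inn}^*$. *)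

(* Defs.v *)
From HB Require Import structures.
From mathcomp Require Import all_boot all_order all_algebra.
Set Implicit Arguments. Unset Strict Implicit. Unset Printing Implicit Defensive.
Import Order.TTheory GRing.Theory Num.Theory.
Local Open Scope ring_scope.

(* V = k^8 (column vectors); a quadratic form n on V is given (char k <> 2)
   by a symmetric matrix S with n(x) = x^T S x; its polar form b_n has
   Gram matrix S + S^T. *)

Section Defs.
Variable k : fieldType.

(* Diagonal entries of the 3-fold Pfister form <<a,b,c>> = <1,-a>(x)<1,-b>(x)<1,-c>. *)
Definition pfister_entry (a b c : k) (i : 'I_8) : k :=
  (if odd i then - a else 1) * (if odd i./2 then - b else 1)
  * (if odd (i./2)./2 then - c else 1).

Definition is_3fold_pfister (S : 'M[k]_8) : Prop :=
  S^T = S /\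
  exists (a b c : k) (P : 'M[k]_8),
    [/\ a != 0, b != 0, c != 0, P \in unitmx &
        S = P^T *m diag_mx (\row_i pfister_entry a b c i) *m P].

Definition similitude (S : 'M[k]_8) (h : 'M[k]_8) : Prop :=
  h \in unitmx /\ exists mu : k, h^T *m S *m h = mu *: S.

(* Proper similarities GO^+(n): for 8-dimensional V, the automorphism of
   C_0(V,n) induced by h acts on the centre via z |-> (det h / mu^4) z,
   so h is proper iff det h = mu(h)^4. *)
Definition proper_similitude (S : 'M[k]_8) (h : 'M[k]_8) : Prop :=
  h \in unitmx /\ exists mu : k, h^T *m S *m h = mu *: S /\ \det h = mu ^+ 4.

Definition same_class (h h' : 'M[k]_8) : Prop :=
  exists c : k, c != 0 /\ h' = c *: h.

(* Adjoint involution of b_n, extended to A (x) End(V) = M_8(A). *)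
Definition adj_inv {R : comNzRingType} (Binv B : 'M[R]_8) (x : 'M[R]_8)
  : 'M[R]_8 := Binv *m x^T *m B.

Definition polarA (S : 'M[k]_8) (A : comAlgType k) : 'M[A]_8 :=
  map_mx (in_alg A) (S + S^T).
Definition polarInvA (S : 'M[k]_8) (A : comAlgType k) : 'M[A]_8 :=
  map_mx (in_alg A) (invmx (S + S^T)).

Definition base_change {R R' : comNzRingType} (f : R -> R')
    (phi : 'M[R]_8 -> 'M[R]_8) (x : 'M[R']_8) : 'M[R']_8 :=
  \sum_(i < 8) \sum_(j < 8) x i j *: map_mx f (phi (delta_mx i j)).

(* phi in PGO(n)(A): A-algebra automorphism of M_8(A) commuting with the
   adjoint involution. *)
Definition PGO_pt (S : 'M[k]_8) (A : comAlgType k) (phi : 'M[A]_8 -> 'M[A]_8)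
  : Prop :=
  [/\ (forall x y, phi (x + y) = phi x + phi y) /\
        (forall (a : A) x, phi (a *: x) = a *: phi x),
      (forall x y, phi (x *m y) = phi x *m phi y),
      phi 1%:M = 1%:M,
      bijective phi &
      (forall x, phi (adj_inv (polarInvA S A) (polarA S A) x) = adj_inv (polarInvA S A) (polarA S A) (phi x))].

(* phi in PGO^+(n)(A) (identity component, an open and closed subscheme):
   at every point of Spec A, i.e. after base change along every k-algebra
   map f : A -> F into a field F, phi becomes Int(g) for a proper similitude g
   of n_F. *)
Definition PGOplus_pt (S : 'M[k]_8) (A : comAlgType k)
    (phi : 'M[A]_8 -> 'M[A]_8) : Prop :=
  PGO_pt S phi /\
  forall (F : fieldType) (j : {rmorphism k -> F}) (f : {rmorphism A -> F}),
    (forall c : k, f (c%:A) = j c) ->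
    exists (g : 'M[F]_8) (mu : F),
      [/\ g \in unitmx,
          g^T *m map_mx j S *m g = mu *: map_mx j S,
          \det g = mu ^+ 4 &
          forall x, base_change f phi x = g *m x *m invmx g].

(* Raw families of maps on points; automorphisms of PGO^+(n) are such
   families satisfying is_aut. *)
Definition trans := forall A : comAlgType k,
  ('M[A]_8 -> 'M[A]_8) -> ('M[A]_8 -> 'M[A]_8).

Definition is_aut (S : 'M[k]_8) (al : trans) : Prop :=
  [/\ (forall A phi, PGOplus_pt S phi -> PGOplus_pt S (al A phi)),
      (forall A phi psi, PGOplus_pt S phi -> PGOplus_pt S psi ->
          al A (phi \o psi) = al A phi \o al A psi),
      (forall A phi psi, PGOplus_pt S phi -> PGOplus_pt S psi ->
          al A phi = al A psi -> phi = psi),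
      (forall A psi, PGOplus_pt S psi ->
          exists phi, PGOplus_pt S phi /\ al A phi = psi) &
      (forall (A A' : comAlgType k) (f : {rmorphism A -> A'}),
          (forall c : k, f (c%:A) = c%:A) ->
          forall phi, PGOplus_pt S phi ->
          al A' (base_change f phi) = base_change f (al A phi))].

Definition teq (S : 'M[k]_8) (al be : trans) : Prop :=
  forall A phi, PGOplus_pt S phi -> al A phi = be A phi.

Definition tcomp (al be : trans) : trans := fun A phi => al A (be A phi).
Definition tid : trans := fun A phi => phi.

Definition kappa (h : 'M[k]_8) : trans := fun A phi x =>
  map_mx (in_alg A) h *m phi (map_mx (in_alg A) (invmx h) *m x
     *m map_mx (in_alg A) h) *m map_mx (in_alg A) (invmx h).

Definition tconj (h : 'M[k]_8) (al : trans) : trans :=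
  tcomp (kappa h) (tcomp al (kappa (invmx h))).

Definition inner (S : 'M[k]_8) (al : trans) : Prop :=
  exists g, proper_similitude S g /\ teq S al (kappa g).
Definition weakly_inner (S : 'M[k]_8) (al : trans) : Prop :=
  exists h, similitude S h /\ teq S al (kappa h).
Definition strongly_outer (S : 'M[k]_8) (al : trans) : Prop :=
  ~ weakly_inner S al.

Definition trialitarian (S : 'M[k]_8) (al : trans) : Prop :=
  [/\ is_aut S al, ~ inner S al,
      teq S (tcomp al (tcomp al al)) tid & ~ teq S al tid].

Definition trialitarian_pair (S : 'M[k]_8) (al1 al2 : trans) : Prop :=
  [/\ is_aut S al1, is_aut S al2, strongly_outer S al1, strongly_outer S al2 &
      ~ (exists h, similitude S h /\ teq S al2 (tcomp al1 (kappa h)))].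

Definition hom_Tri_star (S : 'M[k]_8) (al be : trans) (h : 'M[k]_8) : Prop :=
  similitude S h /\ teq S (tconj h al) be.

Definition hom_Aut (S : 'M[k]_8) (al : trans * trans) (be : trans * trans)
    (h : 'M[k]_8) : Prop :=
  [/\ similitude S h, teq S (tconj h al.1) be.1 & teq S (tconj h al.2) be.2].

Definition G_obj (al : trans) : trans * trans := (al, tcomp al al).
Definition G_mor (h : 'M[k]_8) : 'M[k]_8 := h.

End Defs.

(* Main.v *)
Require Import Defs.
From HB Require Import structures.
From mathcomp Require Import all_boot all_order all_algebra.
From Stdlib Require Import FunctionalExtensionality.
Import Order.TTheory GRing.Theory Num.Theory.
Local Open Scope ring_scope.

Section P.
Variable k : fieldType.


Lemma invmxMx (a b : 'M[k]_8) : a \in unitmx -> b \in unitmx ->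
  invmx (a *m b) = invmx b *m invmx a.
Proof.
move=> au bu.
have e : (a *m b) *m (invmx b *m invmx a) = 1%:M.
  by rewrite mulmxA (mulmxK bu) mulmxV.
have abu : a *m b \in unitmx by rewrite unitmx_mul au bu.
by rewrite -[RHS](mulKmx abu) e mulmx1.
Qed.

Lemma mapUV (A : comAlgType k) (h : 'M[k]_8) : h \in unitmx ->
  map_mx (in_alg A) h *m map_mx (in_alg A) (invmx h) = 1%:M.
Proof. by move=> hu; rewrite -map_mxM mulmxV // map_mx1. Qed.

Lemma mapVU (A : comAlgType k) (h : 'M[k]_8) : h \in unitmx ->
  map_mx (in_alg A) (invmx h) *m map_mx (in_alg A) h = 1%:M.
Proof. by move=> hu; rewrite -map_mxM mulVmx // map_mx1. Qed.

Lemma kappaM (A : comAlgType k) a b phi : a \in unitmx -> b \in unitmx ->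
  @kappa _ (a) A (@kappa _ (b) A phi) = @kappa _ ((a *m b)) A phi.
Proof.
move=> au bu; apply: functional_extensionality => x.
rewrite /kappa invmxMx // !map_mxM !mulmxA.
reflexivity.
Qed.

Lemma kappa1 (A : comAlgType k) phi : @kappa _ 1%:M A phi = phi.
Proof.
apply: functional_extensionality => x.
by rewrite /kappa invmx1 map_mx1 !mul1mx !mulmx1.
Qed.

Lemma kappaK (A : comAlgType k) h phi : h \in unitmx ->
  @kappa _ ((invmx h)) A (@kappa _ (h) A phi) = phi.
Proof.
move=> hu; rewrite kappaM ?unitmx_inv // mulVmx // kappa1 //.
Qed.

Lemma kappa_comp (A : comAlgType k) h f g x : h \in unitmx ->
  @kappa _ h A f (@kappa _ h A g x) = @kappa _ h A (f \o g) x.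
Proof.
move=> hu; rewrite /kappa /=.
set H := map_mx _ h; set Hi := map_mx _ (invmx h).
have e1 : Hi *m H = 1%:M by apply: mapVU.
by rewrite !mulmxA e1 mul1mx -!mulmxA e1 mulmx1.
Qed.

Lemma kappa_id (A : comAlgType k) h x : h \in unitmx ->
  @kappa _ h A id x = x.
Proof.
move=> hu; rewrite /kappa /=.
set H := map_mx _ h; set Hi := map_mx _ (invmx h).
have e1 : H *m Hi = 1%:M by apply: mapUV.
by rewrite !mulmxA e1 mul1mx -!mulmxA e1 mulmx1.
Qed.

Lemma kappa_PGO (S h : 'M[k]_8) (A : comAlgType k) phi :
  h \in unitmx ->
  (forall x, map_mx (in_alg A) (invmx h) *m
       adj_inv (polarInvA S A) (polarA S A) x *m map_mx (in_alg A) h =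
     adj_inv (polarInvA S A) (polarA S A)
       (map_mx (in_alg A) (invmx h) *m x *m map_mx (in_alg A) h)) ->
  PGO_pt S phi -> PGO_pt S (@kappa _ h A phi).
Proof.
move=> hu adjH [[ad sc] mul one [phi' c1 c2] adjc].
have HHi := mapUV A h hu; have HiH := mapVU A h hu.
move: adjH; rewrite /kappa; set H := map_mx _ h; set Hi := map_mx _ (invmx h) => adjH.
have conjM : forall x y, H *m x *m Hi *m (H *m y *m Hi) = H *m (x *m y) *m Hi.
  by move=> x y; rewrite -!mulmxA (mulmxA Hi) HiH mul1mx.
have conjM' : forall x y, Hi *m x *m H *m (Hi *m y *m H) = Hi *m (x *m y) *m H.
  by move=> x y; rewrite -!mulmxA (mulmxA H) HHi mul1mx.
have cK : forall P, Hi *m (H *m P *m Hi) *m H = P.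
  by move=> P; rewrite !mulmxA HiH mul1mx -mulmxA HiH mulmx1.
have cK' : forall P, H *m (Hi *m P *m H) *m Hi = P.
  by move=> P; rewrite !mulmxA HHi mul1mx -mulmxA HHi mulmx1.
split.
- split.
    by move=> x y /=; rewrite mulmxDr mulmxDl ad mulmxDr mulmxDl.
  by move=> a x /=; rewrite -scalemxAr -scalemxAl sc -scalemxAr -scalemxAl.
- by move=> x y /=; rewrite -conjM' mul conjM.
- by rewrite /= mulmx1 HiH one mulmx1 HHi.
- exists (fun x => H *m phi' (Hi *m x *m H) *m Hi) => x.
    by rewrite cK c1 cK'.
  by rewrite cK c2 cK'.
- move=> x /=; rewrite adjH adjc.
  set y := phi _.
  have := adjH (H *m y *m Hi); rewrite cK => <-.
  by rewrite cK'.
Qed.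


Lemma detS_neq0 (S : 'M[k]_8) : is_3fold_pfister S -> \det S != 0.
Proof.
move=> [_ [a [b [c [P [a0 b0 c0 Pu ->]]]]]].
have dP : \det P != 0 by rewrite -unitfE -unitmxE.
rewrite !det_mulmx det_tr det_diag !mulf_neq0 //.
apply/prodf_neq0 => i _; rewrite mxE /pfister_entry.
by rewrite !mulf_neq0 //; case: ifP => _; rewrite ?oppr_eq0 ?oner_eq0.
Qed.

Lemma simM (S a b : 'M[k]_8) : similitude S a -> similitude S b -> similitude S (a *m b).
Proof.
move=> [au [mu ea]] [bu [nu eb]]; split; first by rewrite unitmx_mul au bu.
exists (nu * mu).
have -> : (a *m b)^T *m S *m (a *m b) = b^T *m (a^T *m S *m a) *m b by rewrite trmx_mul !mulmxA.
by rewrite ea -scalemxAr -scalemxAl eb scalerA mulrC.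
Qed.

Lemma sim_inv (S h : 'M[k]_8) (mu : k) : h \in unitmx -> mu != 0 ->
  h^T *m S *m h = mu *: S -> (invmx h)^T *m S *m invmx h = mu^-1 *: S.
Proof.
move=> hu mu0 e.
have e1 : (invmx h)^T *m (h^T *m S *m h) *m invmx h = S.
  rewrite !mulmxA -trmx_mul mulmxV // trmx1 mul1mx -mulmxA mulmxV // mulmx1 //.
by rewrite -{2}e1 e -scalemxAr -scalemxAl scalerA mulVf // scale1r.
Qed.

Lemma sim_inv2_proper (S h : 'M[k]_8) : \det S != 0 -> similitude S h ->
  proper_similitude S (invmx h *m invmx h).
Proof.
move=> dS [hu [mu e]].
have dh : \det h != 0 by rewrite -unitfE -unitmxE.
have de : \det h ^+ 2 = mu ^+ 8.
  have := congr1 determinant e; rewrite detZ !det_mulmx det_tr => /eqP.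
  by rewrite mulrAC -expr2 (inj_eq (mulIf dS)) => /eqP.
have mu0 : mu != 0.
  apply/eqP => m0; move: de; rewrite m0 expr0n /= => /eqP.
  by rewrite expf_eq0 (negPf dh).
have hiu : invmx h \in unitmx by rewrite unitmx_inv.
split; first by rewrite unitmx_mul hiu.
have ei := sim_inv S h mu hu mu0 e.
exists (mu^-1 * mu^-1); split.
  have -> : (invmx h *m invmx h)^T *m S *m (invmx h *m invmx h)
     = (invmx h)^T *m ((invmx h)^T *m S *m invmx h) *m invmx h.
    by rewrite trmx_mul !mulmxA.
  by rewrite ei -scalemxAr -scalemxAl ei scalerA.
rewrite det_mulmx det_inv -[LHS]invfM -expr2 de -invfM -expr2 exprVn -exprM //.
Qed.


Lemma adjH_lem (S h : 'M[k]_8) (mu : k) (A : comAlgType k) :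
  (S + S^T) \in unitmx -> h \in unitmx -> mu != 0 ->
  h^T *m S *m h = mu *: S ->
  forall x, map_mx (in_alg A) (invmx h) *m
       adj_inv (polarInvA S A) (polarA S A) x *m map_mx (in_alg A) h =
     adj_inv (polarInvA S A) (polarA S A)
       (map_mx (in_alg A) (invmx h) *m x *m map_mx (in_alg A) h).
Proof.
move=> Bu hu mu0 e x.
set B := S + S^T.
have KB : h^T *m B *m h = mu *: B.
  have eT : h^T *m S^T *m h = mu *: S^T.
    have := congr1 trmx e; rewrite !trmx_mul trmxK mulmxA => ->.
    by apply/matrixP => i j; rewrite !mxE.
  by rewrite /B mulmxDr mulmxDl e eT scalerDr.
have K1 : invmx B *m h^T = mu *: (invmx h *m invmx B).
  have -> : invmx B *m h^T = invmx B *m (h^T *m B *m h) *m invmx h *m invmx B.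
    by rewrite -!mulmxA (mulmxA h) (mulmxV hu) mul1mx (mulmxV Bu) mulmx1.
  by rewrite KB -scalemxAr (mulVmx Bu) -!scalemxAl mul1mx.
have K2 : (invmx h)^T *m B = mu^-1 *: (B *m h).
  have e2 : B *m h = mu *: ((invmx h)^T *m B).
    by rewrite scalemxAr -KB !mulmxA -trmx_mul mulmxV // trmx1 mul1mx.
  by rewrite e2 scalerA mulVf // scale1r.
rewrite /adj_inv /polarA /polarInvA -/B.
set f := in_alg A.
set H := map_mx f h; set Hi := map_mx f (invmx h).
set B' := map_mx f B; set Bi' := map_mx f (invmx B).
have E1 : Bi' *m map_mx f h^T = f mu *: (Hi *m Bi') by rewrite -map_mxM K1 map_mxZ map_mxM.
have E2 : map_mx f (invmx h)^T *m B' = f mu^-1 *: (B' *m H) by rewrite -map_mxM K2 map_mxZ map_mxM.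
have -> : Bi' *m (Hi *m x *m H)^T *m B' = (Bi' *m map_mx f h^T) *m x^T *m (map_mx f (invmx h)^T *m B').
  by rewrite !trmx_mul !map_trmx !mulmxA.
rewrite E1 E2 -!scalemxAl -!scalemxAr scalerA -rmorphM mulfV // rmorph1 scale1r.
by rewrite !mulmxA.
Qed.
Lemma phi_lin (A : comAlgType k) (phi : 'M[A]_8 -> 'M[A]_8) :
  (forall x y, phi (x + y) = phi x + phi y) -> (forall (a : A) x, phi (a *: x) = a *: phi x) ->
  forall y, phi y = \sum_(i < 8) \sum_(l < 8) y i l *: phi (delta_mx i l).
Proof.
move=> ad sc y.
have phi0 : phi 0 = 0 by have := sc 0 0; rewrite !scale0r.
rewrite {1}(matrix_sum_delta y) (big_morph phi ad phi0); apply: eq_bigr => i _.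
by rewrite (big_morph phi ad phi0); apply: eq_bigr => l _; exact: sc.
Qed.

Lemma BC1 (A : comAlgType k) (F : fieldType) (f : {rmorphism A -> F}) (phi : 'M[A]_8 -> 'M[A]_8) :
  (forall x y, phi (x + y) = phi x + phi y) -> (forall (a : A) x, phi (a *: x) = a *: phi x) ->
  forall y, map_mx f (phi y) = base_change f phi (map_mx f y).
Proof.
move=> ad sc y; rewrite (@phi_lin A phi ad sc) /base_change.
rewrite (big_morph (map_mx f) (@map_mxD _ _ f 8 8) (map_mx0 f 8 8)); apply: eq_bigr => i _.
rewrite (big_morph (map_mx f) (@map_mxD _ _ f 8 8) (map_mx0 f 8 8)); apply: eq_bigr => l _.
by rewrite map_mxZ mxE.
Qed.

Lemma LS (F : fieldType) (M N y : 'M[F]_8) :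
  M *m y *m N = \sum_(i < 8) \sum_(l < 8) y i l *: (M *m delta_mx i l *m N).
Proof.
rewrite {1}(matrix_sum_delta y) mulmx_sumr mulmx_suml; apply: eq_bigr => i _.
rewrite mulmx_sumr mulmx_suml; apply: eq_bigr => l _.
by rewrite -scalemxAr -scalemxAl.
Qed.

Lemma bc_kappa (S h : 'M[k]_8) (mu : k) (A : comAlgType k) (phi : 'M[A]_8 -> 'M[A]_8)
    (F : fieldType) (j : {rmorphism k -> F}) (f : {rmorphism A -> F}) :
  h \in unitmx -> mu != 0 -> h^T *m S *m h = mu *: S ->
  (forall x y, phi (x + y) = phi x + phi y) -> (forall (a : A) x, phi (a *: x) = a *: phi x) ->
  (forall c : k, f (c%:A) = j c) ->
  (exists (g : 'M[F]_8) (mu' : F),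
      [/\ g \in unitmx,
          g^T *m map_mx j S *m g = mu' *: map_mx j S,
          \det g = mu' ^+ 4 &
          forall x, base_change f phi x = g *m x *m invmx g]) ->
  exists (g : 'M[F]_8) (mu' : F),
      [/\ g \in unitmx,
          g^T *m map_mx j S *m g = mu' *: map_mx j S,
          \det g = mu' ^+ 4 &
          forall x, base_change f (@kappa _ h A phi) x = g *m x *m invmx g].
Proof.
move=> hu mu0 e ad sc hf [g [nu [gu eg dg bc]]].
have mapfA : forall M : 'M[k]_8, map_mx f (map_mx (in_alg A) M) = map_mx j M.
  by move=> M; apply/matrixP => a b; rewrite !mxE; apply: hf.
set Hj := map_mx j h; set Hji := map_mx j (invmx h).
have HH : Hj *m Hji = 1%:M by rewrite -map_mxM mulmxV // map_mx1.
have HH' : Hji *m Hj = 1%:M by rewrite -map_mxM mulVmx // map_mx1.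
have Hju : Hj \in unitmx by rewrite map_unitmx.
have Hjiu : Hji \in unitmx by rewrite map_unitmx unitmx_inv.
set g' := Hj *m g *m Hji.
have g'u : g' \in unitmx by rewrite !unitmx_mul Hju gu Hjiu.
have ig' : invmx g' = Hj *m invmx g *m Hji.
  have e1 : g' *m (Hj *m invmx g *m Hji) = 1%:M.
    by rewrite /g' -!mulmxA (mulmxA Hji) HH' mul1mx (mulmxA g) (mulmxV gu) mul1mx HH.
  by rewrite -[RHS](mulKmx g'u) e1 mulmx1.
exists g', nu; split => //.
- have -> : g'^T *m map_mx j S *m g' =
            Hji^T *m (g^T *m (Hj^T *m map_mx j S *m Hj) *m g) *m Hji.
    by rewrite /g' !trmx_mul !mulmxA.
  have E1 : Hj^T *m map_mx j S *m Hj = j mu *: map_mx j S.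
    by rewrite /Hj map_trmx -!map_mxM e map_mxZ.
  have E2 : Hji^T *m map_mx j S *m Hji = j mu^-1 *: map_mx j S.
    by rewrite /Hji map_trmx -!map_mxM (sim_inv S h mu hu mu0 e) map_mxZ.
  rewrite E1 -scalemxAr -scalemxAl eg -scalemxAr -scalemxAl -scalemxAr -scalemxAl E2.
  by rewrite !scalerA mulrAC -rmorphM mulfV // rmorph1 mul1r.
- have := congr1 determinant HH; rewrite det_mulmx det1 => dH.
  by rewrite /g' !det_mulmx mulrAC -dg dH mul1r.
move=> x; rewrite ig' /base_change LS; apply: eq_bigr => a _; apply: eq_bigr => b _.
congr (_ *: _).
rewrite /kappa !map_mxM !mapfA (@BC1 A F f phi ad sc) !map_mxM !mapfA map_delta_mx bc.
by rewrite /g' !mulmxA.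
Qed.


Lemma mu_neq0 (S h : 'M[k]_8) (mu : k) : \det S != 0 -> h \in unitmx ->
  h^T *m S *m h = mu *: S -> mu != 0.
Proof.
move=> dS hu e; apply/eqP => m0.
have dh : \det h != 0 by rewrite -unitfE -unitmxE.
have := congr1 determinant e; rewrite m0 scale0r det0 !det_mulmx det_tr => /eqP.
by rewrite !mulf_eq0 (negPf dh) (negPf dS).
Qed.

Lemma kappa_PGOplus (S h : 'M[k]_8) (A : comAlgType k) phi :
  (2%:R : k) != 0 -> is_3fold_pfister S -> similitude S h ->
  PGOplus_pt S phi -> PGOplus_pt S (@kappa _ h A phi).
Proof.
move=> two pf [hu [mu e]] [pgo H].
have dS := detS_neq0 S pf.
have mu0 := mu_neq0 S h mu dS hu e.
have Bu : S + S^T \in unitmx.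
  case: pf => ST _; rewrite ST.
  have -> : S + S = (2%:R : k) *: S by rewrite scaler_nat mulr2n.
  by rewrite unitmxE detZ unitfE mulf_neq0 // expf_neq0.
split.
  exact: (kappa_PGO S h A phi hu (adjH_lem S h mu A Bu hu mu0 e) pgo).
move=> F j f hf.
case: pgo => [[ad sc] _ _ _ _].
exact: (bc_kappa S h mu A phi F j f hu mu0 e ad sc hf (H F j f hf)).
Qed.

Lemma autsq (S : 'M[k]_8) al : is_aut S al -> is_aut S (tcomp al al).
Proof.
move=> [P1 P2 P3 P4 P5]; split; rewrite /tcomp.
- by move=> A phi hp; apply P1; apply P1.
- by move=> A phi psi hp hq; rewrite P2 // P2 //; apply P1.
- move=> A phi psi hp hq e; apply P3 => //; apply P3 => //; exact: (P1 _ _).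
- move=> A psi hq; have [phi1 [h1 e1]] := P4 A psi hq.
  have [phi2 [h2 e2]] := P4 A phi1 h1; exists phi2; split => //.
  by rewrite e2 e1.
- by move=> A A' f hf phi hp; rewrite P5 // P5 //; apply P1.
Qed.

Lemma so1 (S : 'M[k]_8) al : is_3fold_pfister S -> trialitarian S al ->
  strongly_outer S al.
Proof.
move=> pf [[P1 P2 P3 P4 P5] Hni H3 Hne] [h [hs he]]; apply: Hni.
have hu : h \in unitmx by case: hs.
exists (invmx h *m invmx h); split; first by apply: sim_inv2_proper => //; exact: detS_neq0.
move=> A phi hp.
have e3 : @kappa _ h A (@kappa _ h A (@kappa _ h A phi)) = phi.
  have := H3 A phi hp; rewrite /tcomp /tid.
  rewrite (he A (al A (al A phi))); last by apply P1; apply P1.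
  rewrite (he A (al A phi)); last by apply P1.
  by rewrite (he A phi).
rewrite he // -kappaM ?unitmx_inv //.
by rewrite -{2}e3 !kappaK.
Qed.

End P.

Theorem mainTheorem14 (k : fieldType) (S : 'M[k]_8) :
  (2%:R : k) != 0 -> is_3fold_pfister S ->
  [/\
    (forall al, trialitarian S al ->
       is_aut S (G_obj al).1 /\ is_aut S (G_obj al).2) /\
    (forall al be h, trialitarian S al -> trialitarian S be ->
       hom_Tri_star S al be h -> hom_Aut S (G_obj al) (G_obj be) (G_mor h)),
    (forall al be h h', trialitarian S al -> trialitarian S be ->
       hom_Tri_star S al be h -> hom_Tri_star S al be h' ->
       same_class (G_mor h) (G_mor h') -> same_class h h'),
    (forall al be h, trialitarian S al -> trialitarian S be ->
       hom_Aut S (G_obj al) (G_obj be) h ->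
       exists h', hom_Tri_star S al be h' /\ same_class (G_mor h') h),
    (forall al be, trialitarian S al -> trialitarian S be ->
       teq S (G_obj al).1 (G_obj be).1 -> teq S (G_obj al).2 (G_obj be).2 ->
       teq S al be) &
    (forall al, trialitarian S al ->
       trialitarian_pair S (G_obj al).1 (G_obj al).2)].
Proof.
move=> two pf; split.
- split.
    by move=> al [Ha _ _ _]; split => //=; apply: autsq.
  move=> al be h [[P1 P2 P3 P4 P5] _ _ _] [[Q1 Q2 Q3 Q4 Q5] _ _ _] [hs he].
  have hu : h \in unitmx by case: hs.
  split => //= A phi hp.
  rewrite /tcomp /G_mor -(he A (be A phi)); last exact: (Q1 _ _).
  rewrite -(he A phi) //.
  by rewrite /tconj /tcomp kappaK.
- by [].
- move=> al be h _ _ [hs t1 t2]; exists h; split; first by split.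
  by exists 1; rewrite scale1r oner_neq0.
- by move=> al be _ _ t1 _.
move=> al Tal; have Tal' := Tal; case: Tal' => [Ha Hni H3 Hne].
have [P1 P2 P3 P4 P5] := Ha.
have so := @so1 _ S al pf Tal.
split => //=; first exact: autsq.
- move=> [h [hs he]]; apply: so; exists (h *m h); split; first exact: simM.
  move=> A phi hp.
  have e : al A phi = al A (al A (al A (al A phi))).
    by rewrite /tcomp; have := H3 A (al A phi) (P1 _ _ hp); rewrite /tcomp /tid.
  rewrite e; have he1 := he A (al A (al A phi)); rewrite /tcomp in he1; rewrite he1; last by apply P1; apply P1.
  have he2 := he A phi; rewrite /tcomp in he2; by rewrite he2 // kappaM //; case: hs.
- move=> [h [hs he]]; apply: so; exists h; split => // A phi hp.
  apply P3 => //; [exact: (P1 _ _) | exact: kappa_PGOplus|].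
  by have := he A phi hp; rewrite /tcomp.
Qed.
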